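(* Let $\rho$ be an entangled state on $\mathbb{C}^m\otimes\mathbb{C}^n$ and $\mathcal{E}_\rho=\{W : W \text{ is an EW and } \mathrm{tr}(W\rho)<0\}$. Then: (i) $\mathcal{E}_\rho$ is convex. (ii) $\rho^*$ is entangled, and $W\in\mathcal{E}_\rho$ if and only if $W^*\in\mathcal{E}_{\rho^*}$. Moreover, $\mathcal{E}_\rho$ contains a real EW if and only if $\mathcal{E}_\rho\cap\mathcal{E}_{\rho^*}\neq\emptyset$. (iii) If $\rho$ is PPT entangled, then $W\in\mathcal{E}_\rho$ if and only if $W^\Gamma\in\mathcal{E}_{\rho^\Gamma}$. (iv) If $\rho$ is PPT entangled and $\rho^+$ is separable, then $\mathrm{tr}(W\rho^* )\ge-\mathrm{tr}(W\rho)>0$ whenever $W\in\mathcal{E}_\rho$, and $\mathrm{tr}(W\rho)\ge-\mathrm{tr}(W\rho^* )>0$ whenever $W\in\mathcal{E}_{\rho^*}$. (v) If $\sigma=(U\otimes V)\rho(U\otimes V)^\dagger$ with $U,V$ unitary, then $(U\otimes V)W(U\otimes V)^\dagger\in\mathcal{E}_\sigma$ for every $W\in\mathcal{E}_\rho$, and $\mathcal{E}_\sigma=(U\otimes V)\mathcal{E}_\rho(U\otimes V)^\dagger$.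
   Context: An entanglement witness (EW) on $\mathbb{C}^m\otimes\mathbb{C}^n$ is a Hermitian matrix $W$ with $\mathrm{tr}(W\sigma)\ge0$ for all separable states $\sigma$ and $\mathrm{tr}(W\sigma)<0$ for at least one entangled state. A real EW is an EW whose matrix has real entries. $M^*$ is the entrywise complex conjugate, $\rho^+=\frac12(\rho+\rho^* )$, and $M^\Gamma$ denotes the partial transpose with respect to the first subsystem. A state is PPT if $\rho^\Gamma\ge0$. *)

(* Defs.v *)
From HB Require Import structures.
From mathcomp Require Import all_boot all_order all_algebra.
From mathcomp Require Export mxtens.
Set Implicit Arguments. Unset Strict Implicit. Unset Printing Implicit Defensive.
Import Order.TTheory GRing.Theory Num.Theory.
Local Open Scope ring_scope.

(* Operators on C^m (x) C^n
   are (m*n) x (m*n) matrices, with the index convention of [mxtens]: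
   the global index k corresponds to the pair (k %/ n, k %% n) given by
   [mxtens_unindex], the first component living in the first subsystem. *)

Section QI.
Variable C : numClosedFieldType.

Definition mxconj (p q : nat) (M : 'M[C]_(p, q)) : 'M[C]_(p, q) :=
  map_mx Num.conj M.

Definition adjmx (p q : nat) (M : 'M[C]_(p, q)) : 'M[C]_(q, p) :=
  (mxconj M)^T.

Definition hermitian (N : nat) (A : 'M[C]_N) : Prop := adjmx A = A.

Definition psd (N : nat) (A : 'M[C]_N) : Prop :=
  hermitian A /\ forall v : 'cV[C]_N, 0 <= (adjmx v *m A *m v) 0 0.

Definition is_state (N : nat) (A : 'M[C]_N) : Prop := psd A /\ \tr A = 1.

Definition unitary (N : nat) (U : 'M[C]_N) : Prop := U *m adjmx U = 1%:M.

Definition real_mx (N : nat) (W : 'M[C]_N) : Prop :=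
  forall i j, W i j \is Num.real.

Definition separable (m n : nat) (s : 'M[C]_(m * n)) : Prop :=
  exists (k : nat) (p : 'I_k -> C) (A : 'I_k -> 'M[C]_m) (B : 'I_k -> 'M[C]_n),
    [/\ forall i, 0 <= p i,
        \sum_i p i = 1,
        forall i, is_state (A i),
        forall i, is_state (B i)
      & s = \sum_i p i *: (tensmx (A i) (B i))].

Definition entangled (m n : nat) (rho : 'M[C]_(m * n)) : Prop :=
  is_state rho /\ ~ separable rho.

Definition EW (m n : nat) (W : 'M[C]_(m * n)) : Prop :=
  [/\ hermitian W,
      forall s : 'M[C]_(m * n), separable s -> 0 <= \tr (W *m s)
    & exists rho : 'M[C]_(m * n), entangled rho /\ \tr (W *m rho) < 0].

Definition Eset (m n : nat) (rho : 'M[C]_(m * n)) (W : 'M[C]_(m * n)) : Prop :=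
  EW W /\ \tr (W *m rho) < 0.

(* partial transpose with respect to the first subsystem *)
Definition ptrans (m n : nat) (M : 'M[C]_(m * n)) : 'M[C]_(m * n) :=
  \matrix_(k, l)
    M (mxtens_index ((mxtens_unindex l).1, (mxtens_unindex k).2))
      (mxtens_index ((mxtens_unindex k).1, (mxtens_unindex l).2)).

Definition PPT (m n : nat) (rho : 'M[C]_(m * n)) : Prop := psd (ptrans rho).

Definition rplus (N : nat) (rho : 'M[C]_N) : 'M[C]_N :=
  2^-1 *: (rho + mxconj rho).

End QI.

(* Main.v *)
Require Import Defs.
From HB Require Import structures.
From mathcomp Require Import all_boot all_order all_algebra.
From mathcomp Require Import mxtens.
Import Order.TTheory GRing.Theory Num.Theory.
Local Open Scope ring_scope.
Set Implicit Arguments. Unset Strict Implicit.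

Lemma mxconjM {C : numClosedFieldType} p q r (A : 'M[C]_(p, q)) (B : 'M[C]_(q, r)) :
  mxconj (A *m B) = mxconj A *m mxconj B.
Proof. exact: map_mxM. Qed.

Lemma mxconjK {C : numClosedFieldType} p q (A : 'M[C]_(p, q)) : mxconj (mxconj A) = A.
Proof. by apply/matrixP=> i j; rewrite !mxE conjCK. Qed.

Lemma mxconj_tr {C : numClosedFieldType} p q (A : 'M[C]_(p, q)) : mxconj (A^T) = (mxconj A)^T.
Proof. by apply/matrixP=> i j; rewrite !mxE. Qed.

Lemma adjmxK {C : numClosedFieldType} p q (A : 'M[C]_(p, q)) : adjmx (adjmx A) = A.
Proof. by apply/matrixP=> i j; rewrite !mxE conjCK. Qed.

Lemma adjmxM {C : numClosedFieldType} p q r (A : 'M[C]_(p, q)) (B : 'M[C]_(q, r)) :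
  adjmx (A *m B) = adjmx B *m adjmx A.
Proof. by rewrite /adjmx mxconjM trmx_mul. Qed.

Lemma adjmxD {C : numClosedFieldType} p q (A B : 'M[C]_(p, q)) :
  adjmx (A + B) = adjmx A + adjmx B.
Proof. by apply/matrixP=> i j; rewrite !mxE rmorphD. Qed.

Lemma adjmxZ {C : numClosedFieldType} p q (a : C) (A : 'M[C]_(p, q)) :
  adjmx (a *: A) = a^* *: adjmx A.
Proof. by apply/matrixP=> i j; rewrite !mxE rmorphM. Qed.

Lemma mxconjD {C : numClosedFieldType} p q (A B : 'M[C]_(p, q)) :
  mxconj (A + B) = mxconj A + mxconj B.
Proof. by apply/matrixP=> i j; rewrite !mxE rmorphD. Qed.

Lemma mxconjZ {C : numClosedFieldType} p q (a : C) (A : 'M[C]_(p, q)) :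
  mxconj (a *: A) = a^* *: mxconj A.
Proof. by apply/matrixP=> i j; rewrite !mxE rmorphM. Qed.

Lemma adjmx_conj {C : numClosedFieldType} p q (A : 'M[C]_(p, q)) :
  adjmx (mxconj A) = mxconj (adjmx A).
Proof. by apply/matrixP=> i j; rewrite !mxE. Qed.

Lemma adjmx_tr {C : numClosedFieldType} p q (A : 'M[C]_(p, q)) :
  adjmx (A^T) = (adjmx A)^T.
Proof. by apply/matrixP=> i j; rewrite !mxE. Qed.

Lemma tr_conj {C : numClosedFieldType} p (A : 'M[C]_p) : \tr (mxconj A) = (\tr A)^*.
Proof. by rewrite /mxtrace rmorph_sum; apply: eq_bigr => i _; rewrite mxE. Qed.

Lemma conj_lt0 {C : numClosedFieldType} (x : C) : (x^* < 0) = (x < 0).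
Proof. by rewrite -!oppr_gt0 -rmorphN lt0r conjC_ge0 conjC_eq0 -lt0r. Qed.

Lemma adjmx_tens {C : numClosedFieldType} m n p q (A : 'M[C]_(m, n)) (B : 'M[C]_(p, q)) :
  adjmx (tensmx A B) = tensmx (adjmx A) (adjmx B).
Proof. by rewrite /adjmx /mxconj (map_mxT Num.conj) trmx_tens. Qed.

Lemma mxconj_tens {C : numClosedFieldType} m n p q (A : 'M[C]_(m, n)) (B : 'M[C]_(p, q)) :
  mxconj (tensmx A B) = tensmx (mxconj A) (mxconj B).
Proof. by rewrite /mxconj (map_mxT Num.conj). Qed.

Lemma tens11 {C : numClosedFieldType} m n :
  tensmx (1%:M : 'M[C]_m) (1%:M : 'M[C]_n) = 1%:M.
Proof.
apply/matrixP=> i j.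
case: (mxtens_indexP i)=> i1 i2; case: (mxtens_indexP j)=> j1 j2.
rewrite tensmxE !mxE -natrM mulnb (can_eq (@mxtens_indexK m n)) xpair_eqE.
by [].
Qed.

Lemma unitaryC {C : numClosedFieldType} k (U : 'M[C]_k) : unitary U -> adjmx U *m U = 1%:M.
Proof. exact: mulmx1C. Qed.

Lemma unitary_adj {C : numClosedFieldType} k (U : 'M[C]_k) : unitary U -> unitary (adjmx U).
Proof. by move=> hU; rewrite /Defs.unitary adjmxK; apply: unitaryC. Qed.

Lemma psd_conj {C : numClosedFieldType} k (A : 'M[C]_k) : psd A -> psd (mxconj A).
Proof.
case=> hA pA; have {}hA : adjmx A = A := hA; split; first by rewrite /Defs.hermitian adjmx_conj hA.
move=> v.
have -> : adjmx v *m mxconj A *m v = mxconj (adjmx (mxconj v) *m A *m mxconj v).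
  by rewrite !mxconjM adjmx_conj !mxconjK.
by rewrite mxE conjC_ge0.
Qed.

Lemma psd_tr {C : numClosedFieldType} k (A : 'M[C]_k) : psd A -> psd (A^T).
Proof.
case=> hA pA; have {}hA : adjmx A = A := hA; split; first by rewrite /Defs.hermitian adjmx_tr hA.
move=> v.
have e : forall M : 'M[C]_1, M 0 0 = (M^T) 0 0 by move=> M; rewrite mxE.
rewrite e.
rewrite !trmx_mul trmxK mulmxA.
by move: (pA (mxconj v)); rewrite /adjmx mxconjK trmxK.
Qed.

Lemma psd_congr {C : numClosedFieldType} k l (X : 'M[C]_(k, l)) (A : 'M[C]_k) :
  psd A -> psd (adjmx X *m A *m X).
Proof.
case=> hA pA; have {}hA : adjmx A = A := hA; split; first by rewrite /Defs.hermitian !adjmxM adjmxK hA mulmxA.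
move=> v.
have -> : adjmx v *m (adjmx X *m A *m X) *m v = adjmx (X *m v) *m A *m (X *m v).
  by rewrite adjmxM !mulmxA.
exact: pA.
Qed.

Lemma state_conj {C : numClosedFieldType} k (A : 'M[C]_k) : is_state A -> is_state (mxconj A).
Proof. by case=> pA tA; split; [exact: psd_conj | rewrite tr_conj tA rmorph1]. Qed.

Lemma state_tr {C : numClosedFieldType} k (A : 'M[C]_k) : is_state A -> is_state (A^T).
Proof. by case=> pA tA; split; [exact: psd_tr | rewrite mxtrace_tr]. Qed.

Lemma state_congr {C : numClosedFieldType} k (X : 'M[C]_k) (A : 'M[C]_k) :
  unitary X -> is_state A -> is_state (adjmx X *m A *m X).
Proof.
move=> hX [pA tA]; split; first exact: psd_congr.
by rewrite mxtrace_mulC mulmxA hX mul1mx.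
Qed.

Lemma sep_map {C : numClosedFieldType} m n (f : 'M[C]_(m * n) -> 'M[C]_(m * n))
  (g : 'M[C]_m -> 'M[C]_m) (h : 'M[C]_n -> 'M[C]_n) :
  (forall k (p : 'I_k -> C) (X : 'I_k -> 'M[C]_(m * n)), (forall i, 0 <= p i) ->
     f (\sum_i p i *: X i) = \sum_i p i *: f (X i)) ->
  (forall A B, f (tensmx A B) = tensmx (g A) (h B)) ->
  (forall A, is_state A -> is_state (g A)) ->
  (forall B, is_state B -> is_state (h B)) ->
  forall s, separable s -> separable (f s).
Proof.
move=> fl ft gs hs s [k [p [A [B [p0 p1 As Bs ->]]]]].
exists k, p, (fun i => g (A i)), (fun i => h (B i)); split=> //.
- by move=> i; apply: gs.
- by move=> i; apply: hs.
by rewrite fl //; apply: eq_bigr => i _; rewrite ft.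
Qed.

Lemma sep_conj {C : numClosedFieldType} m n (s : 'M[C]_(m * n)) :
  separable s -> separable (mxconj s).
Proof.
apply: (@sep_map C m n (@mxconj C _ _) (@mxconj C _ _) (@mxconj C _ _)).
- move=> k p X p0; apply/matrixP=> i j; rewrite !mxE !summxE rmorph_sum.
  apply: eq_bigr => l _; rewrite !mxE rmorphM; congr (_ * _); exact: conj_Creal (ger0_real (p0 l)).
- by move=> A B; rewrite mxconj_tens.
- exact: state_conj.
- exact: state_conj.
Qed.

Lemma sep_congr {C : numClosedFieldType} m n (U : 'M[C]_m) (V : 'M[C]_n) (s : 'M[C]_(m * n)) :
  unitary U -> unitary V ->
  separable s -> separable (adjmx (tensmx U V) *m s *m tensmx U V).
Proof.
move=> hU hV.
apply: (@sep_map C m n (fun s => adjmx (tensmx U V) *m s *m tensmx U V)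
    (fun A => adjmx U *m A *m U) (fun B => adjmx V *m B *m V)).
- move=> k p X p0 /=; rewrite mulmx_sumr mulmx_suml; apply: eq_bigr => i _ /=.
  by rewrite -scalemxAr -scalemxAl.
- by move=> A B; rewrite adjmx_tens !tensmx_mul.
- by move=> A; apply: state_congr.
- by move=> A; apply: state_congr.
Qed.

Lemma ptransK {C : numClosedFieldType} m n (M : 'M[C]_(m * n)) : ptrans (ptrans M) = M.
Proof.
apply/matrixP=> k l.
case: (mxtens_indexP k)=> i j; case: (mxtens_indexP l)=> i' j'.
by rewrite !mxE !mxtens_indexK.
Qed.

Lemma ptrans_sum {C : numClosedFieldType} m n k (p : 'I_k -> C) (X : 'I_k -> 'M[C]_(m * n)) :
  ptrans (\sum_i p i *: X i) = \sum_i p i *: ptrans (X i).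
Proof.
apply/matrixP=> a b; rewrite !mxE !summxE; apply: eq_bigr => i _; by rewrite !mxE.
Qed.

Lemma ptrans_tens {C : numClosedFieldType} m n (A : 'M[C]_m) (B : 'M[C]_n) :
  ptrans (tensmx A B) = tensmx A^T B.
Proof.
apply/matrixP=> k l.
case: (mxtens_indexP k)=> i j; case: (mxtens_indexP l)=> i' j'.
by rewrite !mxE !mxtens_indexK /= ?mxtens_indexK.
Qed.

Lemma sep_ptrans {C : numClosedFieldType} m n (s : 'M[C]_(m * n)) :
  separable s -> separable (ptrans s).
Proof.
apply: (@sep_map C m n (@ptrans C m n) (@trmx C m m) id).
- by move=> k p X _; rewrite ptrans_sum.
- by move=> A B; rewrite ptrans_tens.
- exact: state_tr.
- by [].
Qed.

Definition ptphi m n (p : 'I_(m * n) * 'I_(m * n)) : 'I_(m * n) * 'I_(m * n) :=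
  (mxtens_index ((mxtens_unindex p.2).1, (mxtens_unindex p.1).2),
   mxtens_index ((mxtens_unindex p.1).1, (mxtens_unindex p.2).2)).

Lemma ptphiE m n i j i' j' :
  @ptphi m n (mxtens_index (i, j), mxtens_index (i', j')) =
  (mxtens_index (i', j), mxtens_index (i, j')).
Proof. by rewrite /ptphi !mxtens_indexK. Qed.

Lemma ptphiK m n : involutive (@ptphi m n).
Proof.
move=> [k l].
case: (mxtens_indexP k)=> i j; case: (mxtens_indexP l)=> i' j'.
by rewrite !ptphiE.
Qed.

Lemma tr_pairE {C : numClosedFieldType} N (X Y : 'M[C]_N) :
  \tr (X *m Y) = \sum_(p : 'I_N * 'I_N) X p.1 p.2 * Y p.2 p.1.
Proof.
transitivity (\sum_i \sum_j X i j * Y j i).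
  by apply: eq_bigr => i _; rewrite mxE.
by rewrite pair_bigA.
Qed.

Lemma tr_ptrans {C : numClosedFieldType} m n (A B : 'M[C]_(m * n)) :
  \tr (ptrans A *m ptrans B) = \tr (A *m B).
Proof.
rewrite !tr_pairE [RHS](reindex_inj (can_inj (@ptphiK m n))).
by apply: eq_bigr => [[k l]] _; rewrite !mxE.
Qed.

Lemma tr_ptrans1 {C : numClosedFieldType} m n (A : 'M[C]_(m * n)) :
  \tr (ptrans A) = \tr A.
Proof.
apply: eq_bigr => k _; rewrite mxE.
by case: (mxtens_indexP k)=> i j; rewrite !mxtens_indexK.
Qed.

Lemma herm_ptrans {C : numClosedFieldType} m n (W : 'M[C]_(m * n)) :
  Defs.hermitian W -> Defs.hermitian (ptrans W).
Proof.
move=> hW; have {}hW : adjmx W = W := hW.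
rewrite /Defs.hermitian; apply/matrixP=> k l.
by rewrite -{2}hW !mxE.
Qed.

Lemma EsetE {C : numClosedFieldType} m n (rho W : 'M[C]_(m * n)) :
  entangled rho ->
  (Eset rho W <-> [/\ adjmx W = W,
     (forall s, separable s -> 0 <= \tr (W *m s)) & \tr (W *m rho) < 0]).
Proof.
move=> er; split.
  by case=> [[hW sW _] tW]; split.
by case=> hW sW tW; split=> //; split=> //; exists rho.
Qed.

Lemma entangled_conj {C : numClosedFieldType} m n (rho : 'M[C]_(m * n)) :
  entangled rho -> entangled (mxconj rho).
Proof.
case=> sr nsr; split; first exact: state_conj.
by move/sep_conj; rewrite mxconjK.
Qed.

Lemma Eset_conj {C : numClosedFieldType} m n (rho W : 'M[C]_(m * n)) :
  entangled rho -> Eset rho W -> Eset (mxconj rho) (mxconj W).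
Proof.
move=> er /(EsetE _ er) [hW sW tW].
apply/(EsetE _ (entangled_conj er)); split.
- by rewrite adjmx_conj hW.
- move=> s /sep_conj ss.
  by rewrite -[s]mxconjK -mxconjM tr_conj conjC_ge0; apply: sW.
- by rewrite -mxconjM tr_conj conj_lt0.
Qed.

Lemma Eset_conjE {C : numClosedFieldType} m n (rho W : 'M[C]_(m * n)) :
  entangled rho -> (Eset rho W <-> Eset (mxconj rho) (mxconj W)).
Proof.
move=> er; split; first exact: Eset_conj.
by move/(Eset_conj (entangled_conj er)); rewrite !mxconjK.
Qed.

Lemma Eset_convex {C : numClosedFieldType} m n (rho W1 W2 : 'M[C]_(m * n)) (t : C) :
  entangled rho -> 0 <= t -> t <= 1 -> Eset rho W1 -> Eset rho W2 ->
  Eset rho (t *: W1 + (1 - t) *: W2).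
Proof.
move=> er t0 t1 /(EsetE _ er) [h1 s1 n1] /(EsetE _ er) [h2 s2 n2].
have t1' : 0 <= 1 - t by rewrite subr_ge0.
apply/(EsetE _ er); split.
- rewrite adjmxD !adjmxZ h1 h2 (conj_Creal (ger0_real t0)).
  by rewrite (conj_Creal (ger0_real t1')).
- move=> s ss; rewrite mulmxDl -!scalemxAl mxtraceD !mxtraceZ.
  by rewrite addr_ge0 // mulr_ge0 // ?s1 ?s2.
- rewrite mulmxDl -!scalemxAl mxtraceD !mxtraceZ.
  have [->|tn0] := eqVneq t 0.
    by rewrite mul0r add0r subr0 mul1r.
  have tp : 0 < t by rewrite lt0r tn0.
  rewrite -[0](addr0 0); apply: ltr_leD.
    by rewrite pmulr_rlt0.
  by rewrite mulr_ge0_le0 // ltW.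
Qed.

Lemma real_part {C : numClosedFieldType} m n (rho : 'M[C]_(m * n)) :
  entangled rho ->
  ((exists W : 'M[C]_(m * n), Eset rho W /\ real_mx W) <->
   (exists W : 'M[C]_(m * n), Eset rho W /\ Eset (mxconj rho) W)).
Proof.
move=> er; split.
  case=> W [EW rW]; exists W; split=> //.
  have -> : W = mxconj W by apply/matrixP=> i j; rewrite mxE conj_Creal.
  exact: Eset_conj.
case=> W [E1 E2].
have E3 : Eset rho (mxconj W).
  by move/(Eset_conj (entangled_conj er)): E2; rewrite mxconjK.
have h0 : 0 <= 2^-1 :> C by rewrite invr_ge0 ler0n.
have h1 : 2^-1 <= 1 :> C by rewrite invf_le1 ?ltr0n // ler1n.
have h2 : 1 - 2^-1 = 2^-1 :> C by rewrite {1}(splitr 1) mul1r addrK.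
exists (2^-1 *: W + (1 - 2^-1) *: mxconj W); split.
  exact: Eset_convex.
have cc : forall x : C, Num.Num_conj__canonical__GRing_RMorphism C x = x^* by [].
move=> i j; rewrite h2 !mxE CrealE rmorphD !rmorphM !cc conjCK.
by rewrite (conj_Creal (ger0_real h0)) addrC.
Qed.

Lemma entangled_ptrans {C : numClosedFieldType} m n (rho : 'M[C]_(m * n)) :
  entangled rho -> PPT rho -> entangled (ptrans rho).
Proof.
case=> [[_ tr] nsr] pp; split; first by split=> //; rewrite tr_ptrans1.
by move/sep_ptrans; rewrite ptransK.
Qed.

Lemma Eset_ptrans {C : numClosedFieldType} m n (rho W : 'M[C]_(m * n)) :
  entangled rho -> PPT rho -> (Eset rho W <-> Eset (ptrans rho) (ptrans W)).
Proof.
move=> er pp; have ept := entangled_ptrans er pp.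
split.
  move/(EsetE _ er)=> [hW sW tW]; apply/(EsetE _ ept); split.
  - exact: (herm_ptrans hW).
  - move=> s /sep_ptrans ss; rewrite -[s]ptransK tr_ptrans; exact: sW.
  - by rewrite tr_ptrans.
move/(EsetE _ ept)=> [hW sW tW]; apply/(EsetE _ er); split.
- by have := herm_ptrans hW; rewrite ptransK.
- move=> s /sep_ptrans ss; rewrite -tr_ptrans; exact: sW.
- by rewrite -tr_ptrans.
Qed.

Lemma part4 {C : numClosedFieldType} m n (rho W : 'M[C]_(m * n)) :
  separable (rplus rho) ->
  (forall s, separable s -> 0 <= \tr (W *m s)) ->
  0 <= \tr (W *m rho) + \tr (W *m mxconj rho).
Proof.
move=> sp sW; have := sW _ sp.
rewrite /rplus -scalemxAr mxtraceZ mulmxDr mxtraceD.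
by rewrite pmulr_rge0 // invr_gt0 ltr0n.
Qed.

Lemma TTadj {C : numClosedFieldType} m n (U : 'M[C]_m) (V : 'M[C]_n) :
  unitary U -> unitary V -> tensmx U V *m adjmx (tensmx U V) = 1%:M.
Proof. by move=> hU hV; rewrite adjmx_tens tensmx_mul hU hV tens11. Qed.

Lemma adjTT {C : numClosedFieldType} m n (U : 'M[C]_m) (V : 'M[C]_n) :
  unitary U -> unitary V -> adjmx (tensmx U V) *m tensmx U V = 1%:M.
Proof. by move=> hU hV; rewrite adjmx_tens tensmx_mul !unitaryC // tens11. Qed.

Lemma entangled_congr {C : numClosedFieldType} m n (U : 'M[C]_m) (V : 'M[C]_n)
  (rho : 'M[C]_(m * n)) : unitary U -> unitary V -> entangled rho ->
  entangled (tensmx U V *m rho *m adjmx (tensmx U V)).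
Proof.
move=> hU hV [sr nsr]; split.
  rewrite -{1}[tensmx U V]adjmxK; apply: state_congr=> //.
  by rewrite /Defs.unitary adjmxK adjTT.
move/(sep_congr hU hV); rewrite !mulmxA adjTT // mul1mx -mulmxA adjTT // mulmx1.
exact: nsr.
Qed.

Lemma Eset_congr {C : numClosedFieldType} m n (U : 'M[C]_m) (V : 'M[C]_n)
  (rho W : 'M[C]_(m * n)) : unitary U -> unitary V -> entangled rho ->
  Eset rho W ->
  Eset (tensmx U V *m rho *m adjmx (tensmx U V)) (tensmx U V *m W *m adjmx (tensmx U V)).
Proof.
move=> hU hV er /(EsetE _ er) [hW sW tW].
apply/(EsetE _ (entangled_congr hU hV er)); split.
- by rewrite !adjmxM adjmxK hW mulmxA.
- move=> s ss.
  have -> : \tr (tensmx U V *m W *m adjmx (tensmx U V) *m s) =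
            \tr (W *m (adjmx (tensmx U V) *m s *m tensmx U V)).
    by rewrite -!mulmxA mxtrace_mulC !mulmxA.
  exact/sW/sep_congr.
- have -> : tensmx U V *m W *m adjmx (tensmx U V) *m
            (tensmx U V *m rho *m adjmx (tensmx U V)) =
            tensmx U V *m (W *m rho) *m adjmx (tensmx U V).
    by rewrite !mulmxA -[_ *m _ *m adjmx _ *m tensmx U V]mulmxA adjTT // mulmx1.
  by rewrite mxtrace_mulC mulmxA adjTT // mul1mx.
Qed.

Unset Implicit Arguments. Set Strict Implicit.

Theorem lemma3 (C : numClosedFieldType) (m n : nat) (rho : 'M[C]_(m * n)) :
  entangled rho ->
  (* (i) convexity *)
  (forall (W1 W2 : 'M[C]_(m * n)) (t : C), 0 <= t -> t <= 1 ->
     Eset rho W1 -> Eset rho W2 -> Eset rho (t *: W1 + (1 - t) *: W2)) /\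
  (* (ii) *)
  (entangled (mxconj rho) /\
   (forall W : 'M[C]_(m * n), Eset rho W <-> Eset (mxconj rho) (mxconj W)) /\
   ((exists W : 'M[C]_(m * n), Eset rho W /\ real_mx W) <->
    (exists W : 'M[C]_(m * n), Eset rho W /\ Eset (mxconj rho) W))) /\
  (* (iii) *)
  (PPT rho ->
   forall W : 'M[C]_(m * n), Eset rho W <-> Eset (ptrans rho) (ptrans W)) /\
  (* (iv) *)
  (PPT rho -> separable (rplus rho) ->
   (forall W : 'M[C]_(m * n), Eset rho W ->
      - \tr (W *m rho) <= \tr (W *m mxconj rho) /\ 0 < - \tr (W *m rho)) /\
   (forall W : 'M[C]_(m * n), Eset (mxconj rho) W ->
      - \tr (W *m mxconj rho) <= \tr (W *m rho) /\ 0 < - \tr (W *m mxconj rho))) /\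
  (* (v) *)
  (forall (U : 'M[C]_m) (V : 'M[C]_n) (sigma : 'M[C]_(m * n)),
     unitary U -> unitary V ->
     sigma = (tensmx U V) *m rho *m adjmx (tensmx U V) ->
     (forall W : 'M[C]_(m * n), Eset rho W ->
        Eset sigma ((tensmx U V) *m W *m adjmx (tensmx U V))) /\
     (forall X : 'M[C]_(m * n), Eset sigma X <->
        exists W : 'M[C]_(m * n), Eset rho W /\
                                  X = (tensmx U V) *m W *m adjmx (tensmx U V))).
Proof.
move=> er.
have erc := entangled_conj er.
split; first by move=> W1 W2 t t0 t1; apply: Eset_convex.
split; first by split=> //; split; [move=> W; exact: Eset_conjE | exact: real_part].
split; first by move=> pp W; apply: Eset_ptrans.
split.
  move=> _ sp; split.
    move=> W /(EsetE _ er) [hW sW tW].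
    have := part4 sp sW.
    by move=> h; split; [rewrite -subr_ge0 opprK addrC | rewrite oppr_gt0].
  move=> W /(EsetE _ erc) [hW sW tW].
  have := part4 sp sW.
  by move=> h; split; [rewrite -subr_ge0 opprK | rewrite oppr_gt0].
move=> U V sigma hU hV ->; split.
  by move=> W; apply: Eset_congr.
move=> X; split; last first.
  by case=> W [EW ->]; apply: Eset_congr.
move=> EX.
have es := entangled_congr hU hV er.
exists (adjmx (tensmx U V) *m X *m tensmx U V); split.
  have := Eset_congr (unitary_adj hU) (unitary_adj hV) es EX.
  rewrite -adjmx_tens adjmxK !mulmxA adjTT // mul1mx -mulmxA adjTT // mulmx1.
  by [].
by rewrite !mulmxA TTadj // mul1mx -mulmxA TTadj // mulmx1.
Qed.
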